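(* Let $M,N$ be locally free $\widehat H$-modules with $\operatorname{Ext}^1_{\widehat H}(M,N)=0$. Then the natural map $\mathbb{F}\otimes_{\mathbb{F}[[\epsilon]]}\operatorname{Hom}_{\widehat H}(M,N)\to\operatorname{Hom}_H(\operatorname{Red}(M),\operatorname{Red}(N))$ is an isomorphism of $\mathbb{F}$-vector spaces.
   Context: Setup for $H$. Let $I=\{1,\dots,n\}$ and let $C=(c_{ij})\in\mathbb{Z}^{I\times I}$ be a symmetrizable generalized Cartan matrix with symmetrizer $D=\operatorname{diag}(c_1,\dots,c_n)$, $c_i\in\mathbb{Z}_{>0}$, $DC$ symmetric. An orientation $\Omega\subset I\times I$ contains, for each pair $i\ne j$ with $c_{ij}<0$, exactly one of $(i,j),(j,i)$, and nothing else; we assume $(i,j)\in\Omega\Rightarrow i<j$. For $c_{ij}<0$ set $g_{ij}=\gcd(c_{ij},c_{ji})$, $f_{ij}=-c_{ij}/g_{ij}$. For a field $\mathbb{F}$ let $H_i=\mathbb{F}[\varepsilon_i]/(\varepsilon_i^{c_i})$, $S=\prod_{i\in I}H_i$; for $(i,j)\in\Omega$ let ${}_iH'_j$ be the $H_i$-$H_j$-bimodule generated by $\alpha_{ij}$ subject to $\varepsilon_i^{f_{ji}}\alpha_{ij}=\alpha_{ij}\varepsilon_j^{f_{ij}}$, ${}_iH_j=({}_iH'_j)^{g_{ij}}$, and $H=T_S(\bigoplus_{(i,j)\in\Omega}{}_iH_j)$. Setup for $\widehat H$. Let $c=\operatorname{lcm}(c_i)$, $R=\mathbb{F}[[\epsilon]]$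 (with $\mathbb{F}=R/\epsilon R$); inside $\mathbb{F}((\epsilon^{1/c}))$ put $\epsilon_i=\epsilon^{1/c_i}$. Let $\widehat S=\prod_i\mathbb{F}[[\epsilon_i]]$, ${}_i\widehat H_j=(\mathbb{F}[[\epsilon_i,\epsilon_j]])^{g_{ij}}$, $\widehat H=T_{\widehat S}(\bigoplus_{(i,j)\in\Omega}{}_i\widehat H_j)$, an $R$-algebra via $\epsilon\mapsto(\epsilon_i^{c_i})_i$; $\widehat H/\epsilon\widehat H\cong H$ and $\operatorname{Red}(M)=H\otimes_{\widehat H}M=M/\epsilon M$. An $\widehat H$-module is locally free if each $e_iM$ is free over $\mathbb{F}[[\epsilon_i]]$. *)

(* Defs.v *)
From HB Require Import structures.
From mathcomp Require Import all_boot all_order all_algebra.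
Set Implicit Arguments. Unset Strict Implicit. Unset Printing Implicit Defensive.
Import Order.TTheory GRing.Theory Num.Theory.
Local Open Scope ring_scope.

Definition series (F : fieldType) := nat -> F.

Section Series.
Variable F : fieldType.
Definition ps_zero : series F := fun _ => 0.
Definition ps_one : series F := fun k => (k == 0%N)%:R.
Definition ps_add (a b : series F) : series F := fun k => a k + b k.
Definition ps_mul (a b : series F) : series F :=
  fun k => \sum_(i < k.+1) a i * b (k - i)%N.
Definition ps_X (e : nat) : series F := fun k => (k == e)%:R.
(* substitution a(t) |-> a(t^e)  (used with e > 0) *)
Definition ps_subst (a : series F) (e : nat) : series F :=
  fun k => if (e %| k)%N then a (k %/ e)%N else 0.
End Series.

Record psmod (F : fieldType) := PSMod {
  ps_car :> zmodType;
  ps_act : series F -> ps_car -> ps_car;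
  ps_act_addl : forall a b v, ps_act (ps_add a b) v = ps_act a v + ps_act b v;
  ps_act_addr : forall a v w, ps_act a (v + w) = ps_act a v + ps_act a w;
  ps_act_mul : forall a b v, ps_act (ps_mul a b) v = ps_act a (ps_act b v);
  ps_act_one : forall v, ps_act (ps_one F) v = v
}.
Arguments ps_act {F} _ _ _.

Definition ps_free (F : fieldType) (V : psmod F) : Prop :=
  exists (B : eqType) (b : B -> V),
    (forall v : V, exists (s : seq B) (a : B -> series F),
        v = \sum_(x <- s) ps_act V (a x) (b x)) /\
    (forall (s : seq B) (a : B -> series F), uniq s ->
        \sum_(x <- s) ps_act V (a x) (b x) = 0 ->
        forall x, x \in s -> a x = ps_zero F).

Definition is_gcm (n : nat) (C : 'M[int]_n) : Prop :=
  (forall i, C i i = 2) /\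
  (forall i j, i != j -> C i j <= 0) /\
  (forall i j, (C i j == 0) = (C j i == 0)).

Definition is_symmetrizer (n : nat) (C : 'M[int]_n) (c : 'I_n -> nat) : Prop :=
  (forall i, (0 < c i)%N) /\
  (forall i j, (c i)%:Z * C i j = (c j)%:Z * C j i).

Definition is_orientation (n : nat) (C : 'M[int]_n) (Om : rel 'I_n) : Prop :=
  (forall i j, Om i j -> C i j < 0) /\
  (forall i j, i != j -> C i j < 0 -> Om i j (+) Om j i) /\
  (forall i j, Om i j -> (i < j)%N).

Definition gC (n : nat) (C : 'M[int]_n) (i j : 'I_n) : nat :=
  gcdn `|C i j|%N `|C j i|%N.
Definition fC (n : nat) (C : 'M[int]_n) (i j : 'I_n) : nat :=
  (`|C i j|%N %/ gC C i j)%N.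
(* number of arrow components i <- j : g_ij if (i,j) in Omega, 0 otherwise *)
Definition garr (n : nat) (C : 'M[int]_n) (Om : rel 'I_n) (i j : 'I_n) : nat :=
  if Om i j then gC C i j else 0%N.

(* Modules over \hat H, described as representations of the species:         *)
(*  - at each vertex i an F[[eps_i]]-module M_i (eps_i is the variable t);   *)
(*  - for (i,j) in Omega and k < g_ij a map M_j -> M_i which is linear over  *)
(*    F[[eps^{1/d}]], acting on M_j via eps_j^{f_ij} and on M_i via          *)
(*    eps_i^{f_ji}, i.e. phi(a(eps_j^{f_ij}) v) = a(eps_i^{f_ji}) phi(v).    *)
Record hrep (F : fieldType) (n : nat) (C : 'M[int]_n) (Om : rel 'I_n) := HRep {
  hv : 'I_n -> psmod F;
  harr : forall i j : 'I_n, 'I_(garr C Om i j) -> hv j -> hv i;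
  harr_add : forall (i j : 'I_n) k (v w : hv j), @harr i j k (v + w) = @harr i j k v + @harr i j k w;
  harr_semilin : forall (i j : 'I_n) k a (v : hv j),
      @harr i j k (ps_act (hv j) (ps_subst a (fC C i j)) v) =
      ps_act (hv i) (ps_subst a (fC C j i)) (@harr i j k v)
}.
Arguments harr {F n C Om} _ {i j} _ _.
Arguments hv {F n C Om} _ _.

Record hhom (F : fieldType) (n : nat) (C : 'M[int]_n) (Om : rel 'I_n)
    (M N : hrep F C Om) := HHom {
  hmap : forall i, hv M i -> hv N i;
  hmap_add : forall i (v w : hv M i), @hmap i (v + w) = @hmap i v + @hmap i w;
  hmap_act : forall i a (v : hv M i),
      @hmap i (ps_act (hv M i) a v) = ps_act (hv N i) a (@hmap i v);
  hmap_arr : forall i j k (v : hv M j), @hmap i (harr M k v) = harr N k (@hmap j v)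
}.
Arguments hmap {F n C Om M N} _ _ _.

Definition locally_free (F : fieldType) (n : nat) (C : 'M[int]_n) (Om : rel 'I_n)
    (M : hrep F C Om) : Prop :=
  forall i, ps_free (hv M i).

(* Ext^1(M, N) = 0 (Yoneda): every short exact sequence 0 -> N -> E -> M -> 0
   of \hat H-modules splits. *)
Definition ext1_zero (F : fieldType) (n : nat) (C : 'M[int]_n) (Om : rel 'I_n)
    (M N : hrep F C Om) : Prop :=
  forall (E : hrep F C Om) (u : hhom N E) (p : hhom E M),
    (forall i, injective (hmap u i)) ->
    (forall i (y : hv M i), exists x, hmap p i x = y) ->
    (forall i (x : hv E i), hmap p i x = 0 <-> exists y, x = hmap u i y) ->
    exists s : hhom M E, forall i (x : hv M i), hmap p i (hmap s i x) = x.

(* eps = eps_i^{c_i} acting on e_i M;  x \in eps (e_i M) *)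
Definition eps_act (F : fieldType) (n : nat) (C : 'M[int]_n) (Om : rel 'I_n)
    (c : 'I_n -> nat) (M : hrep F C Om) (i : 'I_n) (v : hv M i) : hv M i :=
  ps_act (hv M i) (ps_X F (c i)) v.
Definition in_eps (F : fieldType) (n : nat) (C : 'M[int]_n) (Om : rel 'I_n)
    (c : 'I_n -> nat) (M : hrep F C Om) (i : 'I_n) (x : hv M i) : Prop :=
  exists y, x = eps_act c y.

(* H-module homomorphisms Red(M) -> Red(N), Red(X) = X / eps X, given through
   representatives: a family of maps phi_i : e_i M -> e_i N which is, modulo
   eps N, additive, H_i-linear (F[[eps_i]]/(eps) = H_i), sends eps M into
   eps N, and commutes with the arrows.  Two such families define the same
   homomorphism iff they agree modulo eps N. *)
Definition red_hom (F : fieldType) (n : nat) (C : 'M[int]_n) (Om : rel 'I_n)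
    (c : 'I_n -> nat) (M N : hrep F C Om) (phi : forall i, hv M i -> hv N i) : Prop :=
  (forall i (v w : hv M i), in_eps c (phi i (v + w) - phi i v - phi i w)) /\
  (forall i a (v : hv M i),
      in_eps c (phi i (ps_act (hv M i) a v) - ps_act (hv N i) a (phi i v))) /\
  (forall i (v : hv M i), in_eps c v -> in_eps c (phi i v)) /\
  (forall i j k (v : hv M j), in_eps c (phi i (harr M k v) - harr N k (phi j v))).

(* Main.v *)
Require Import Defs.
From HB Require Import structures.
From mathcomp Require Import all_boot all_order all_algebra.
From mathcomp Require Import zify.
From Stdlib Require Import ClassicalEpsilon FunctionalExtensionality.
Import Order.TTheory GRing.Theory Num.Theory.
Local Open Scope ring_scope.

Section PS.
Variable F : fieldType.

Lemma ps_mulC (a b : series F) : ps_mul a b = ps_mul b a.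
Proof.
apply: functional_extensionality => k; rewrite /ps_mul.
rewrite (reindex_inj rev_ord_inj) /=; apply: eq_bigr => i _.
by rewrite mulrC subKn // -ltnS.
Qed.

Lemma ps_mulX e (a : series F) k :
  ps_mul (ps_X F e) a k = if (e <= k)%N then a (k - e)%N else 0.
Proof.
rewrite /ps_mul /ps_X; case: ifP => hek.
  have he : (e < k.+1)%N by [].
  rewrite (bigD1 (Ordinal he)) //= eqxx mul1r big1 ?addr0 // => i /= hi.
  have -> : (nat_of_ord i == e) = false.
    by apply/negbTE; apply: contra hi => /eqP h; apply/eqP; apply: val_inj.
  by rewrite mul0r.
apply: big1 => i _; case: eqP => [h|]; last by rewrite mul0r.
by exfalso; move: (ltn_ord i); rewrite h ltnS hek.
Qed.

Lemma ps_mulX_inj {e} {a : series F} : ps_mul (ps_X F e) a = ps_zero F -> a = ps_zero F.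
Proof.
move=> h; apply: functional_extensionality => k.
have := congr1 (fun f => f (k + e)%N) h; rewrite ps_mulX leq_addl addnK.
by [].
Qed.

Lemma ps_substX e f : (0 < f)%N -> ps_subst (ps_X F e) f = ps_X F (e * f).
Proof.
move=> f0; apply: functional_extensionality => k; rewrite /ps_subst /ps_X.
case: ifP => hd.
  by rewrite -(eqn_pmul2r f0) divnK.
case: eqP => // hk; exfalso; move: hd; rewrite hk dvdn_mull //.
Qed.

Variable V : psmod F.

Lemma ps_act0 a : ps_act V a 0 = 0.
Proof.
have h := @ps_act_addr _ V a 0 0; rewrite addr0 in h.
by rewrite -[LHS]addr0 -[X in _ + X](subrr (ps_act V a 0)) addrA -h subrr.
Qed.

Lemma ps_actN a v : ps_act V a (- v) = - ps_act V a v.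
Proof.
by apply: (addrI (ps_act V a v)); rewrite -ps_act_addr !subrr ps_act0.
Qed.

Lemma ps_actB a v w : ps_act V a (v - w) = ps_act V a v - ps_act V a w.
Proof. by rewrite ps_act_addr ps_actN. Qed.

Lemma ps_act_zero v : ps_act V (ps_zero F) v = 0.
Proof.
have e : ps_add (ps_zero F) (ps_zero F) = ps_zero F.
  by apply: functional_extensionality => k; rewrite /ps_add /ps_zero addr0.
have h := @ps_act_addl _ V (ps_zero F) (ps_zero F) v; rewrite e in h.
set x := ps_act V _ v in h *.
by rewrite -[LHS]addr0 -[X in _ + X](subrr x) addrA -h subrr.
Qed.

Lemma ps_act_sum (I : Type) (s : seq I) (G : I -> V) a :
  ps_act V a (\sum_(x <- s) G x) = \sum_(x <- s) ps_act V a (G x).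
Proof.
elim: s => [|x s IH]; first by rewrite !big_nil ps_act0.
by rewrite !big_cons ps_act_addr IH.
Qed.

Lemma ps_act_comm a b v : ps_act V a (ps_act V b v) = ps_act V b (ps_act V a v).
Proof. by rewrite -!ps_act_mul ps_mulC. Qed.

Lemma free_tf (hf : ps_free V) e (y : V) : ps_act V (ps_X F e) y = 0 -> y = 0.
Proof.
case: hf => B [b [hspan hind]].
case: (hspan y) => s [a ->] h.
pose a' x := iter (count_mem x s) (ps_add (a x)) (ps_zero F).
have ea : forall x, ps_act V (a' x) (b x) =
    iterop (count_mem x s) +%R (ps_act V (a x) (b x)) 0.
  move=> x; rewrite Monoid.iteropE /a'; elim: (count_mem x s) => [|m IH] /=.
    by rewrite ps_act_zero.
  by rewrite ps_act_addl IH.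
have es : \sum_(x <- s) ps_act V (a x) (b x) = \sum_(x <- undup s) ps_act V (a' x) (b x).
  by rewrite -big_undup_iterop_count; apply: eq_bigr => x _; rewrite ea.
rewrite es in h *; rewrite ps_act_sum in h.
have h' : \sum_(x <- undup s) ps_act V (ps_mul (ps_X F e) (a' x)) (b x) = 0.
  by rewrite -[RHS]h; apply: eq_bigr => x _; rewrite ps_act_mul.
have hz := hind (undup s) (fun x => ps_mul (ps_X F e) (a' x)) (undup_uniq s) h'.
rewrite big_seq big1 // => x hx.
by rewrite (ps_mulX_inj (hz x hx)) ps_act_zero.
Qed.

Definition ine e (x : V) := exists y, x = ps_act V (ps_X F e) y.

Lemma ine0 e : ine e 0.
Proof. by exists 0; rewrite ps_act0. Qed.
Lemma ineD e x y : ine e x -> ine e y -> ine e (x + y).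
Proof. by move=> [u ->] [w ->]; exists (u + w); rewrite ps_act_addr. Qed.
Lemma ineN e x : ine e x -> ine e (- x).
Proof. by move=> [u ->]; exists (- u); rewrite ps_actN. Qed.
Lemma ineB e x y : ine e x -> ine e y -> ine e (x - y).
Proof. by move=> hx hy; apply: ineD => //; apply: ineN. Qed.
Lemma ine_act e a x : ine e x -> ine e (ps_act V a x).
Proof. by move=> [u ->]; exists (ps_act V a u); rewrite ps_act_comm. Qed.
Lemma ineX e y : ine e (ps_act V (ps_X F e) y).
Proof. by exists y. Qed.

End PS.
Arguments ine {F} V e x.
Arguments ineD {F V e x y}.
Arguments ineN {F V e x}.
Arguments ineB {F V e x y}.
Arguments ine_act {F V e} a {x}.
Arguments ine0 {F V e}.
Arguments ineX {F V e}.

Local Close Scope ring_scope.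
Lemma arith (A B ci cj : nat) : (0 < A)%N -> (0 < B)%N -> ci * A = cj * B ->
  let g := gcdn A B in
  [/\ 0 < A %/ g, 0 < B %/ g, A %/ g %| cj & cj %/ (A %/ g) * (B %/ g) = ci]%N.
Proof.
move=> A0 B0 e g.
have g0 : (0 < g)%N by rewrite gcdn_gt0 A0.
have eA : A = A %/ g * g by rewrite divnK // dvdn_gcdl.
have eB : B = B %/ g * g by rewrite divnK // dvdn_gcdr.
set f1 := A %/ g in eA *; set f2 := B %/ g in eB *.
have f10 : (0 < f1)%N by move: A0; rewrite eA muln_gt0 => /andP[].
have f20 : (0 < f2)%N by move: B0; rewrite eB muln_gt0 => /andP[].
have cop : coprime f1 f2.
  by rewrite /coprime -(eqn_pmul2r g0) mul1n muln_gcdl -eA -eB.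
have e2 : ci * f1 = cj * f2.
  apply/eqP; rewrite -(eqn_pmul2r g0) -!mulnA -eA -eB; exact/eqP.
have d : (f1 %| cj)%N.
  by rewrite -(Gauss_dvdl _ cop) -e2 dvdn_mull.
split => //.
apply/eqP; rewrite -(eqn_pmul2r f10) mulnAC divnK // -e2 mulnC //.
Qed.

Local Open Scope ring_scope.
Lemma arr_data (n : nat) (C : 'M[int]_n) (c : 'I_n -> nat) (Om : rel 'I_n)
    (HC : is_gcm C) (HD : is_symmetrizer C c) (HOm : is_orientation C Om) i j :
  Om i j ->
  [/\ (0 < fC C i j)%N, (0 < fC C j i)%N, (fC C i j %| c j)%N
    & (c j %/ fC C i j * fC C j i = c i)%N].
Proof.
move=> hO.
case: HC => _ [HCle HCeq]; case: HD => _ HDs; case: HOm => HO1 [_ HO3].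
have Cij := HO1 _ _ hO.
have ij : i != j by apply/negP => /eqP e; move: (HO3 _ _ hO); rewrite e ltnn.
have Cji0 : C j i != 0.
  by rewrite -(HCeq i j); apply/negP => /eqP e; move: Cij; rewrite e ltxx.
have A0 : (0 < `|C i j|)%N by rewrite absz_gt0; apply/negP => /eqP e; move: Cij; rewrite e ltxx.
have B0 : (0 < `|C j i|)%N by rewrite absz_gt0.
have e : (c i * `|C i j| = c j * `|C j i|)%N.
  by have := congr1 absz (HDs i j); rewrite !abszM !absz_nat.
have := @arith _ _ _ _ A0 B0 e; rewrite /= => -[h1 h2 h3 h4].
by rewrite /fC /gC (gcdnC `|C j i|%N).
Qed.

Lemma harr_eps (F : fieldType) (n : nat) (C : 'M[int]_n) (c : 'I_n -> nat) (Om : rel 'I_n)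
    (HC : is_gcm C) (HD : is_symmetrizer C c) (HOm : is_orientation C Om)
    (N : hrep F C Om) i j (k : 'I_(garr C Om i j)) (y : hv N j) :
  harr N k (ps_act (hv N j) (ps_X F (c j)) y) = ps_act (hv N i) (ps_X F (c i)) (harr N k y).
Proof.
have [hO|hO] := boolP (Om i j); last first.
  exfalso; have : (nat_of_ord k < garr C Om i j)%N := ltn_ord k.
  by move: (nat_of_ord k) => m; rewrite /garr (negbTE hO).
have [h1 h2 h3 h4] := @arr_data _ _ _ _ HC HD HOm _ _ hO.
have e1 : ps_X F (c j) = ps_subst (ps_X F (c j %/ fC C i j)) (fC C i j).
  by rewrite ps_substX // divnK.
have e2 : ps_X F (c i) = ps_subst (ps_X F (c j %/ fC C i j)) (fC C j i).
  by rewrite ps_substX // h4.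
by rewrite e1 e2 harr_semilin.
Qed.

Section Z. Variable V : zmodType.
Lemma zL2 (p q w : V) : p - w = (p - q) - (w - q).
Proof. by rewrite opprB addrA subrK. Qed.
Lemma zL1 (a b c d u : V) : a + b - u = (a - c) + (b - d) - (u - c - d).
Proof. rewrite [LHS](zL2 _ (c + d)) opprD addrACA -(addrA u). done. Qed.
Lemma zL3 (z p q : V) : p + q = z - (z - q - p).
Proof. by rewrite -addrA -opprD opprB [RHS]addrC subrK addrC. Qed.
End Z.

Definition pb (P : Prop) : bool := if excluded_middle_informative P then true else false.
Lemma pbP P : reflect P (pb P).
Proof. by rewrite /pb; case: excluded_middle_informative => h; constructor. Qed.

Section Pull.
Variables (F : fieldType) (V W : psmod F) (f : V -> W) (e : nat).
Hypothesis fadd : forall v w, ine W e (f (v + w) - f v - f w).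
Hypothesis fact : forall a v, ine W e (f (ps_act V a v) - ps_act W a (f v)).

Lemma f0 : ine W e (f 0).
Proof.
have h := fadd 0 0; rewrite addr0 subrr sub0r in h.
by rewrite -[f 0]opprK; apply: ineN.
Qed.

Lemma fN x : ine W e (f (- x) + f x).
Proof.
have h := fadd x (- x); rewrite subrr in h.
rewrite (zL3 _ (f 0)); exact: ineB f0 h.
Qed.

Definition Epred (p : V * W) : bool := pb (ine W e (p.2 - f p.1)).
Definition Ecar : Type := {p : V * W | Epred p}.
HB.instance Definition _ := Choice.on Ecar.

Lemma E0_proof : Epred (0, 0).
Proof. by apply/pbP; rewrite /= sub0r; apply: ineN; apply: f0. Qed.
Definition E0 : Ecar := exist Epred _ E0_proof.

Lemma Eadd_proof (p q : Ecar) : Epred (val p + val q).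
Proof.
case: p q => [[x1 y1] /= /pbP h1] [[x2 y2] /= /pbP h2]; apply/pbP => /=.
rewrite (zL1 _ _ _ (f x1) (f x2)); apply: ineB; [exact: ineD | exact: fadd].
Qed.
Definition Eadd (p q : Ecar) : Ecar := exist Epred _ (Eadd_proof p q).

Lemma Eopp_proof (p : Ecar) : Epred (- val p).
Proof.
case: p => [[x y] /= /pbP h]; apply/pbP => /=.
rewrite (zL2 _ _ (- f x)) opprK; apply: ineB; last exact: fN.
by have := ineN h; rewrite opprB addrC.
Qed.
Definition Eopp (p : Ecar) : Ecar := exist Epred _ (Eopp_proof p).

Lemma EaddA : associative Eadd.
Proof. by move=> p q r; apply: val_inj; rewrite /= addrA. Qed.
Lemma EaddC : commutative Eadd.
Proof. by move=> p q; apply: val_inj; rewrite /= addrC. Qed.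
Lemma Eadd0 : left_id E0 Eadd.
Proof. by move=> p; apply: val_inj; rewrite /= add0r. Qed.
Lemma EaddN : left_inverse E0 Eopp Eadd.
Proof. by move=> p; apply: val_inj; rewrite /= addNr. Qed.

HB.instance Definition _ := GRing.isZmodule.Build Ecar EaddA EaddC Eadd0 EaddN.

Lemma Eact_proof a (p : Ecar) : Epred (ps_act V a (val p).1, ps_act W a (val p).2).
Proof.
case: p => [[x y] /= /pbP h]; apply/pbP => /=.
rewrite (zL2 _ _ (ps_act W a (f x))) -ps_actB; apply: ineB; last exact: fact.
exact: ine_act.
Qed.
Definition Eact a (p : Ecar) : Ecar := exist Epred _ (Eact_proof a p).

Lemma Eact_addl a b (v : Ecar) : Eact (ps_add a b) v = Eact a v + Eact b v.
Proof. by apply: val_inj; rewrite /= !ps_act_addl. Qed.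
Lemma Eact_addr a (v w : Ecar) : Eact a (v + w) = Eact a v + Eact a w.
Proof. by apply: val_inj; rewrite /= !ps_act_addr. Qed.
Lemma Eact_mul a b (v : Ecar) : Eact (ps_mul a b) v = Eact a (Eact b v).
Proof. by apply: val_inj; rewrite /= !ps_act_mul. Qed.
Lemma Eact_one (v : Ecar) : Eact (ps_one F) v = v.
Proof. by apply: val_inj; case: v => [[x y] ?]; rewrite /= !ps_act_one. Qed.

Definition Epsmod : psmod F := @PSMod F Ecar Eact Eact_addl Eact_addr Eact_mul Eact_one.

End Pull.
Arguments Ecar {F V W} f e.
Arguments Epred {F V W} f e p.

Lemma Eeq (F : fieldType) (V W : psmod F) (f : V -> W) (e : nat) (p q : Ecar f e) :
  val p = val q -> p = q.
Proof. exact: val_inj. Qed.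

Lemma harr0 (F : fieldType) (n : nat) (C : 'M[int]_n) (Om : rel 'I_n) (X : hrep F C Om)
  i j (k : 'I_(garr C Om i j)) : harr X k 0 = 0.
Proof.
have h := harr_add k (0 : hv X j) 0; rewrite addr0 in h.
set x := harr X k 0 in h *.
by rewrite -[LHS]addr0 -[X in _ + X](subrr x) addrA -h subrr.
Qed.

Lemma tf (F : fieldType) (V : psmod F) (hf : ps_free V) e (y1 y2 : V) :
  ps_act V (ps_X F e) y1 = ps_act V (ps_X F e) y2 -> y1 = y2.
Proof.
move=> h; apply/eqP; rewrite -subr_eq0; apply/eqP; apply: (@free_tf F V hf e).
by rewrite ps_actB h subrr.
Qed.

Section HR.
Variables (F : fieldType) (n : nat) (C : 'M[int]_n) (c : 'I_n -> nat) (Om : rel 'I_n)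
 (HC : is_gcm C) (HD : is_symmetrizer C c) (HOm : is_orientation C Om)
 (M N : hrep F C Om) (phi : forall i, hv M i -> hv N i) (Hphi : red_hom c phi).

Lemma phadd i v w : ine (hv N i) (c i) (phi i (v + w) - phi i v - phi i w).
Proof. exact: Hphi.1. Qed.
Lemma phact i a v : ine (hv N i) (c i) (phi i (ps_act (hv M i) a v) - ps_act (hv N i) a (phi i v)).
Proof. exact: Hphi.2.1. Qed.

Definition hvE i : psmod F := @Epsmod F (hv M i) (hv N i) (phi i) (c i) (@phadd i) (@phact i).

Lemma harrE_proof {i j} (k : 'I_(garr C Om i j)) (p : Ecar (phi j) (c j)) :
  Epred (phi i) (c i) (harr M k (val p).1, harr N k (val p).2).
Proof.
case: p => [[x y] /= /pbP h]; apply/pbP => /=.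
rewrite -[y](subrK (phi j x)) harr_add (zL2 _ _ (harr N k (phi j x))) addrK.
apply: ineB; last exact: Hphi.2.2.2.
case: h => z ->; rewrite (@harr_eps _ _ _ _ _ HC HD HOm); exact: ineX.
Qed.

Definition harrE {i j} (k : 'I_(garr C Om i j)) (p : hvE j) : hvE i :=
  exist (Epred (phi i) (c i)) _ (harrE_proof k p).

Lemma harrE_add (i j : 'I_n) k (v w : hvE j) : @harrE i j k (v + w) = @harrE i j k v + @harrE i j k w.
Proof. by apply: Eeq; rewrite /= !harr_add. Qed.

Lemma harrE_semilin (i j : 'I_n) k a (v : hvE j) :
  @harrE i j k (ps_act (hvE j) (ps_subst a (fC C i j)) v) =
  ps_act (hvE i) (ps_subst a (fC C j i)) (@harrE i j k v).
Proof. by apply: Eeq; rewrite /= !harr_semilin. Qed.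

Definition Ehrep : hrep F C Om := @HRep F n C Om hvE (@harrE) harrE_add harrE_semilin.

Lemma uE_proof {i} (y : hv N i) : Epred (phi i) (c i) (0, ps_act (hv N i) (ps_X F (c i)) y).
Proof.
apply/pbP => /=; apply: ineB; first exact: ineX.
exact: (@f0 F (hv M i) (hv N i) (phi i) (c i) (@phadd i)).
Qed.

Definition uEmap {i} (y : hv N i) : hv Ehrep i := exist (Epred (phi i) (c i)) _ (uE_proof y).

Lemma uE_add i (v w : hv N i) : uEmap (v + w) = uEmap v + uEmap w.
Proof. by apply: Eeq; rewrite /= ps_act_addr -[X in (X, _)](addr0 0). Qed.
Lemma uE_act i a (v : hv N i) :
  uEmap (ps_act (hv N i) a v) = ps_act (hv Ehrep i) a (uEmap v).
Proof. by apply: Eeq; rewrite /= ps_act0 ps_act_comm. Qed.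
Lemma uE_arr i j k (v : hv N j) : uEmap (harr N k v) = harr Ehrep (i:=i) k (uEmap v).
Proof. by apply: Eeq; rewrite /= harr0 (@harr_eps _ _ _ _ _ HC HD HOm). Qed.

Definition uE : hhom N Ehrep := HHom uE_add uE_act uE_arr.

Definition pEmap {i} (p : hv Ehrep i) : hv M i := (val p).1.
Lemma pE_add i (v w : hv Ehrep i) : pEmap (v + w) = pEmap v + pEmap w.
Proof. by []. Qed.
Lemma pE_act i a (v : hv Ehrep i) :
  pEmap (ps_act (hv Ehrep i) a v) = ps_act (hv M i) a (pEmap v).
Proof. by []. Qed.
Lemma pE_arr i j k (v : hv Ehrep j) : pEmap (harr Ehrep (i:=i) k v) = harr M k (pEmap v).
Proof. by []. Qed.

Definition pE : hhom Ehrep M := HHom pE_add pE_act pE_arr.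

End HR.

Theorem lemma5p11 (F : fieldType) (n : nat) (C : 'M[int]_n) (c : 'I_n -> nat)
    (Om : rel 'I_n)
    (HC : is_gcm C) (HD : is_symmetrizer C c) (HOm : is_orientation C Om)
    (M N : hrep F C Om) :
  locally_free M -> locally_free N -> ext1_zero M N ->
  (* surjectivity of  F (x)_{F[[eps]]} Hom(M,N) -> Hom_H(Red M, Red N) *)
  (forall phi : forall i, hv M i -> hv N i, red_hom c phi ->
     exists h : hhom M N, forall i (v : hv M i), in_eps c (hmap h i v - phi i v)) /\
  (* injectivity: Red(h) = 0 iff h \in eps Hom(M,N) *)
  (forall h : hhom M N, (forall i (v : hv M i), in_eps c (hmap h i v)) ->
     exists h' : hhom M N, forall i (v : hv M i), hmap h i v = eps_act c (hmap h' i v)).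
Proof.
move=> lfM lfN hext.
have tfN : forall i (y1 y2 : hv N i),
    ps_act (hv N i) (ps_X F (c i)) y1 = ps_act (hv N i) (ps_X F (c i)) y2 -> y1 = y2.
  by move=> i; apply: (@tf _ _ (lfN i) (c i)).
split.
- move=> phi Hphi.
  set E := @Ehrep F n C c Om HC HD HOm M N phi Hphi.
  set u := @uE F n C c Om HC HD HOm M N phi Hphi.
  set p := @pE F n C c Om HC HD HOm M N phi Hphi.
  have inj : forall i, injective (hmap u i).
    move=> i y1 y2 /(congr1 (fun q => (val q).2)) /= h; exact: tfN h.
  have sur : forall i (y : hv M i), exists x, hmap p i x = y.
    move=> i y; have pr : Epred (phi i) (c i) (y, phi i y).
      by apply/pbP; rewrite /= subrr; exact: ine0.
    by exists (exist (Epred (phi i) (c i)) _ pr).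
  have ker : forall i (x : hv E i), hmap p i x = 0 <-> exists y, x = hmap u i y.
    move=> i [[x1 x2] hx]; split.
    + move=> e1; have {}e1 : x1 = 0 by exact: e1.
      subst x1; have hx' := elimT (pbP _) hx.
      have : ine (hv N i) (c i) x2.
        rewrite -(subrK (phi i 0) x2); apply: ineD hx' _.
        exact: (@f0 F (hv M i) (hv N i) (phi i) (c i) (@phadd F n C c Om M N phi Hphi i)).
      by case=> y ey; exists y; apply: Eeq; rewrite /= ey.
    + by case=> y ->.
  case: (hext E u p inj sur ker) => s hs.
  have hadd : forall i (v w : hv M i),
      (val (hmap s i (v + w))).2 = (val (hmap s i v)).2 + (val (hmap s i w)).2.
    by move=> i v w; rewrite hmap_add.
  have hact : forall i a (v : hv M i),
      (val (hmap s i (ps_act (hv M i) a v))).2 = ps_act (hv N i) a (val (hmap s i v)).2.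
    by move=> i a v; rewrite hmap_act.
  have harr' : forall i j k (v : hv M j),
      (val (hmap s i (harr M k v))).2 = harr N k (val (hmap s j v)).2.
    by move=> i j k v; rewrite hmap_arr.
  exists (HHom hadd hact harr') => i v /=.
  move: (hs i v); case: (hmap s i v) => [[x1 x2] hx] e1; have {}e1 : x1 = v by exact: e1.
  by rewrite -e1; exact: (elimT (pbP _) hx).
- move=> h hh.
  pose h' i v := proj1_sig (constructive_indefinite_description _ (hh i v)).
  have hh' : forall i v, hmap h i v = ps_act (hv N i) (ps_X F (c i)) (h' i v).
    by move=> i v; exact: (proj2_sig (constructive_indefinite_description _ (hh i v))).
  have hadd : forall i (v w : hv M i), h' i (v + w) = h' i v + h' i w.
    by move=> i v w; apply: tfN; rewrite ps_act_addr -!hh' hmap_add.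
  have hact : forall i a (v : hv M i),
      h' i (ps_act (hv M i) a v) = ps_act (hv N i) a (h' i v).
    by move=> i a v; apply: tfN; rewrite [RHS]ps_act_comm -!hh' hmap_act.
  have harr' : forall i j k (v : hv M j), h' i (harr M k v) = harr N k (h' j v).
    move=> i j k v; apply: tfN.
    by rewrite -[RHS](@harr_eps _ _ _ _ _ HC HD HOm) -!hh' hmap_arr.
  by exists (HHom hadd hact harr') => i v /=; exact: hh'.
Qed.
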